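(* Let $n\ge 2$, $T=\{1,\dots,n\}$, $\mathcal T$ a topology on $T$, and fix $k\ge 1$ such that the set $I=\{1,\dots,n-1\}\setminus X_{k-1}$ of indices of new quotient spaces is nonempty. Suppose all $N_i$, $i\in I$, are equal to a common value $s$ (Case 1: $\mu_1\ne 0$, $\mu_2=\mu_3=0$). Then the new $k$-systems of $\mathcal T$ form one of the following configurations, where each $A_j$ denotes a (possibly empty) set of old points and each $R_j$ a nonempty set of new points: (1a) the new $k$-systems are exactly $s+1$ upper non-paired $k$-systems $A_1\cup R_1,\dots,A_{s+1}\cup R_{s+1}$, each new point lies in exactly one of the sets $R_j$, and $\mu_1$ equals the total number of new points; (1b) the new $k$-systems are exactly $s$ pairs $A_j\cup R_j$, $A_j\cup R_j\cup\{n\}$ ($j=1,\dots,s$); (1c) there are no new $k$-systems (and $s=0$); (1d) the new $k$-systems are exactly lower $k$-systems $A_1\cup R_1\cup\{n\},\dots,A_x\cup R_x\cup\{n\}$ (non-paired), and each new point lies in exactly one of the sets $R_j$.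
   Context: For $\alpha\in T$, $\alpha^{*}$ denotes the smallest open set of $\mathcal T$ containing $\alpha$. For $m\ge 0$, an $m$-system is an open set $P$ with $|P\setminus\{n\}|=m$; upper if $n\notin P$, lower if $n\in P$. Two $k$-systems $P$ and $P\cup\{n\}$ ($n\notin P$) that are both open are called paired; a $k$-system not part of such a pair is non-paired. At stage $k$, a point $\alpha\neq n$ is old if $\alpha^{*}$ is an $m$-system for some $m<k$, and new if $\alpha^{*}$ is a $k$-system; $X_{k-1}$ is the set of old points. A $k$-system is new if it contains a point $p\neq n$ not contained in any $m$-system with $m\le k-1$. For $i\in\{1,\dots,n-1\}$, $Q^{i}$ is the quotient space obtained by identifying $i$ and $n$ (natural map $f_i$ onto $T(i,n)=\{\{z\}:z\notin\{i,n\}\}\cup\{\{i,n\}\}$; $V$ open iff $f_i^{-1}(V)\in\mathcal T$). $Q^{i}$ is a new quotient space if $i\notin X_{k-1}$. A new open $k$-set of $Q^{i}$ is an open $V$ of $Q^{i}$ with $|V|=k$ such that $f_i^{-1}(V)$ is a new $k$-system; $N_i$ is their number. With $s=\min_{i\in I}N_i$, $\mu_1,\mu_2,\mu_3$ denote the numbers of $i\in I$ with $N_i=s$, $s+1$, $s+2$ respectively (by a theorem of the paper, $N_i\in\{s,s+1,s+2\}$ always). *)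

(* Defs.v *)
From mathcomp Require Import all_boot.
Set Implicit Arguments. Unset Strict Implicit. Unset Printing Implicit Defensive.

Section Topo.
Variables (T : finType) (nn : T) (tau : {set {set T}}).

(* a topology on the finite set T (finite unions/intersections suffice) *)
Definition is_topology : Prop :=
  [/\ set0 \in tau, setT \in tau,
      (forall U V, U \in tau -> V \in tau -> U :|: V \in tau) &
      (forall U V, U \in tau -> V \in tau -> U :&: V \in tau)].

Definition star (a : T) : {set T} := \bigcap_(U in tau | a \in U) U.

Definition msystem (m : nat) (P : {set T}) : bool :=
  (P \in tau) && (#|P :\ nn| == m).
Definition upper (P : {set T}) : bool := nn \notin P.
Definition lower (P : {set T}) : bool := nn \in P.

(* P belongs to a pair  Q, Q ∪ {n}  of open sets (n ∉ Q) *)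
Definition paired (P : {set T}) : bool :=
  (P \in tau) &&
  (if nn \in P then P :\ nn \in tau else nn |: P \in tau).
Definition nonpaired (k : nat) (P : {set T}) : bool :=
  msystem k P && ~~ paired P.

Definition old_pts (k : nat) : {set T} :=
  [set a | (a != nn) && [exists m : 'I_k, msystem m (star a)]].
Definition new_pts (k : nat) : {set T} :=
  [set a | (a != nn) && msystem k (star a)].

Definition new_ksys (k : nat) (P : {set T}) : bool :=
  msystem k P &&
  [exists p in P, (p != nn) &&
     [forall Q in tau, (p \in Q) ==> ~~ [exists m : 'I_k, msystem m Q]]].
Definition new_ksystems (k : nat) : {set {set T}} := [set P | new_ksys k P].

(* quotient Q^i identifying i and n: the class {i,n} is represented by n *)
Definition fq (i : T) (x : T) : T := if x == i then nn else x.
Definition quot_open (i : T) (V : {set T}) : bool :=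
  (V \subset fq i @: setT) && (fq i @^-1: V \in tau).
Definition Nq (k : nat) (i : T) : nat :=
  #|[set V | quot_open i V && (#|V| == k) && new_ksys k (fq i @^-1: V)]|.

Definition Iset (k : nat) : {set T} :=
  [set i | (i != nn) && (i \notin old_pts k)].

End Topo.

Lemma lastpt_proof (n : nat) : 2 <= n -> n.-1 < n.
Proof. by case: n. Qed.
(* the point n of T = {1,...,n}, where point j is encoded by j-1 : 'I_n *)
Definition lastpt (n : nat) (h : 2 <= n) : 'I_n := Ordinal (lastpt_proof h).

(* Main.v *)
Require Import Defs.
From mathcomp Require Import all_boot.
From mathcomp Require Import zify.
Set Implicit Arguments. Unset Strict Implicit. Unset Printing Implicit Defensive.

Section S.
Variables (T : finType) (nn : T) (tau : {set {set T}}) (k : nat).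
Hypothesis Htop : is_topology tau.

Local Notation star := (star tau).
Local Notation Old := (old_pts nn tau k).
Local Notation New := (new_pts nn tau k).
Local Notation NS := (new_ksystems nn tau k).

Lemma star_open a : star a \in tau.
Proof. case: Htop => H0 HT HU HI; rewrite /Defs.star; apply: (big_ind (fun U : {set T} => U \in tau)) => //. all: try (move=> *; exact: HI). by move=> i /andP[]. Qed.

Lemma star_in a : a \in star a.
Proof. by apply/bigcapP => U /andP[_ H]. Qed.

Lemma star_min a U : U \in tau -> a \in U -> star a \subset U.
Proof. by move=> H1 H2; apply: bigcap_inf; rewrite H1 H2. Qed.

Lemma sys_pt P p : P \in tau -> p \in P -> #|star p :\ nn| <= #|P :\ nn|.
Proof. by move=> H1 H2; apply/subset_leq_card/setSD/star_min. Qed.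

Lemma oldP a : reflect (a != nn /\ #|star a :\ nn| < k) (a \in Old).
Proof.
rewrite inE; apply: (iffP andP) => [[H /existsP[m /andP[_ /eqP E]]]|[H lt]]; split => //.
  by rewrite E ltn_ord.
by apply/existsP; exists (Ordinal lt); rewrite /msystem star_open eqxx.
Qed.

Lemma newP a : reflect (a != nn /\ #|star a :\ nn| = k) (a \in New).
Proof.
rewrite inE /msystem star_open /=; apply: (iffP andP) => [[H /eqP E]|[H E]]; split => //.
by rewrite E.
Qed.

Lemma new_ksysP P : new_ksys nn tau k P = msystem nn tau k P && [exists p in P, p \in New].
Proof.
rewrite /new_ksys; case Hm: (msystem _ _ _ _) => //=.
move/andP: Hm => [HP /eqP HPk].
apply/existsP/existsP => [[p /and3P[pP pnn /forallP H]] | [p /andP[pP /newP [pnn pk]]]]; exists p.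
  rewrite pP; apply/newP; split => //.
  have le := sys_pt HP pP; rewrite HPk in le.
  have: ~~ (#|star p :\ nn| < k).
    apply/negP => lt; have := H (star p).
    rewrite star_open star_in /= => /negP; apply; apply/existsP; exists (Ordinal lt).
    by rewrite /msystem star_open eqxx.
  by rewrite -leqNgt => ?; apply/eqP; rewrite eqn_leq le.
rewrite pP pnn /=; apply/forallP => Q; apply/implyP => HQ; apply/implyP => pQ.
apply/negP => /existsP [m /andP[_ /eqP Em]].
by have := sys_pt HQ pQ; rewrite pk Em leqNgt ltn_ord.
Qed.

Lemma F1 P p : P \in tau -> #|P :\ nn| = k -> p \in P -> p != nn -> (p \in Old) || (p \in New).
Proof.
move=> HP Hk pP pn; have := sys_pt HP pP; rewrite Hk leq_eqVlt => /orP[/eqP E|lt].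
  by apply/orP; right; apply/newP.
by apply/orP; left; apply/oldP.
Qed.

Lemma old_new p : p \in Old -> p \notin New.
Proof. by move=> /oldP[_ lt]; apply/negP => /newP[_ E]; rewrite E ltnn in lt. Qed.

Lemma new_sys p P : p \in New -> P \in tau -> #|P :\ nn| = k -> p \in P -> P :\ nn = star p :\ nn.
Proof.
move=> /newP[pn pk] HP Hk pP; apply/eqP; rewrite eq_sym eqEcard setSD ?star_min //=.
by rewrite Hk pk.
Qed.

Lemma NSP P : (P \in NS) = [&& P \in tau, #|P :\ nn| == k & [exists p in P, p \in New]].
Proof. by rewrite inE new_ksysP /msystem andbA. Qed.

Lemma NS_p p P : p \in New -> (P \in NS) && (p \in P) = (P \in tau) && (P :\ nn == star p :\ nn).
Proof.
move=> pN; rewrite NSP; apply/idP/idP.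
  case/andP => /and3P[HP /eqP Hk _] pP; by rewrite HP (new_sys pN HP Hk pP) eqxx.
case/andP => HP /eqP E; move: (pN) => /newP[pn pk].
have pP : p \in P.
  have : p \in star p :\ nn by rewrite !inE pn star_in.
  by rewrite -E => /setD1P[].
by rewrite HP E pk eqxx /= pP andbT; apply/existsP; exists p; rewrite pP pN.
Qed.

Lemma D1eq P S : (P :\ nn == S :\ nn) = (P == S :\ nn) || (P == nn |: S).
Proof.
apply/idP/idP.
  move/eqP/setP=> E; case Pn: (nn \in P); apply/orP; [right|left]; apply/eqP/setP => x;
  have := E x; rewrite !inE; case: (eqVneq x nn) => [->|xn] //=; by rewrite Pn.
by case/orP => /eqP ->; apply/eqP/setP => x; rewrite !inE; case: (eqVneq x nn).
Qed.


Lemma NKP P : new_ksys nn tau k P -> P \in tau /\ #|P :\ nn| = k.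
Proof. by rewrite new_ksysP /msystem => /andP[/andP[H /eqP E] _]. Qed.

Lemma Nq_eq i : i != nn -> Nq nn tau k i = #|[set P in NS | (i \in P) == (nn \in P)]|.
Proof.
move=> inn; rewrite /Nq.
have fqi: fq nn i i = nn by rewrite /fq eqxx.
have fqn: fq nn i nn = nn by rewrite /fq eq_sym (negbTE inn).
have fqx x: x != i -> fq nn i x = x by move=> /negbTE; rewrite /fq => ->.
have rng (V : {set T}): (V \subset fq nn i @: setT) = (i \notin V).
  apply/idP/idP.
    move=> Hs; apply/negP=> iV; have /imsetP[x _] := subsetP Hs i iV; rewrite /fq.
    case: (eqVneq x i) => [_ E|xi E]; first by rewrite E eqxx in inn.
    by rewrite E eqxx in xi.
  move=> iV; apply/subsetP => y yV; apply/imsetP; exists y => //.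
  have yi: y != i by apply/eqP=> E; rewrite -E yV in iV.
  by rewrite fqx.
rewrite -(card_in_imset (f := fun V : {set T} => fq nn i @^-1: V)).
  congr #|pred_of_set _|; apply/setP => P; apply/imsetP/idP.
    move=> [V]; rewrite !inE => /andP[/andP[Hq Hc] HN] ->.
    by rewrite !inE HN fqi fqn eqxx.
  rewrite !inE => /andP[HN /eqP C].
  have preq: fq nn i @^-1: (P :\ i) = P.
    apply/setP => x; rewrite !inE; case: (eqVneq x i) => [->|xi].
      by rewrite fqi C eq_sym inn.
    by rewrite fqx // xi.
  exists (P :\ i) => //.
  have [HP Hk] := NKP HN.
  rewrite !inE /quot_open rng preq !inE eqxx /= HN HP andbT.
  have E1 := cardsD1 i P; have E2 := cardsD1 nn P; rewrite C E2 Hk in E1.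
  by rewrite /= -(addnI E1).
move=> V1 V2; rewrite !inE /quot_open => /andP[/andP[/andP[H1 _] _] _] /andP[/andP[/andP[H2 _] _] _] E.
rewrite rng in H1; rewrite rng in H2.
apply/setP => y; case: (eqVneq y i) => [->|yi]; first by rewrite (negbTE H1) (negbTE H2).
by move/setP: E => /(_ y); rewrite !inE fqx.
Qed.


Lemma D1_id (a : T) (A : {set T}) : a \notin A -> A :\ a = A.
Proof. by move=> H; apply/setP => x; rewrite !inE; case: eqVneq => // ->; rewrite (negbTE H). Qed.

Lemma U1_id (a : T) (A : {set T}) : a \in A -> a |: A = A.
Proof. by move=> H; apply/setP => x; rewrite !inE; case: eqVneq => // ->; rewrite H. Qed.

Lemma key_gen p P : p \in New -> new_ksys nn tau k P ->
  (p \in P) = (P == star p :\ nn) || (P == nn |: star p).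
Proof.
move=> pN NK; have := NS_p P pN; rewrite inE NK /= => ->.
by rewrite D1eq (NKP NK).1.
Qed.

Lemma Sd_notopen p : p \in New -> nn \in star p -> star p :\ nn \notin tau.
Proof.
move=> /newP[pn _] nS; apply/negP => H.
have : p \in star p :\ nn by rewrite !inE pn star_in.
move/(star_min H)/subsetP/(_ nn nS); by rewrite !inE eqxx.
Qed.

Lemma typeA p P : p \in New -> nn \notin star p -> nn |: star p \notin tau ->
  new_ksys nn tau k P -> (p \in P) = (P == star p).
Proof.
move=> pN nS nSt NK; rewrite (key_gen pN NK) (D1_id nS).
have PT := (NKP NK).1.
case: (eqVneq P (nn |: star p)) => [E|_]; last by rewrite orbF.
by rewrite -E PT in nSt.
Qed.

Lemma typeB p P : p \in New -> nn \notin star p ->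
  new_ksys nn tau k P -> (p \in P) = (P == star p) || (P == nn |: star p).
Proof. by move=> pN nS NK; rewrite (key_gen pN NK) (D1_id nS). Qed.

Lemma typeC p P : p \in New -> nn \in star p ->
  new_ksys nn tau k P -> (p \in P) = (P == star p).
Proof.
move=> pN nS NK; rewrite (key_gen pN NK) (U1_id nS) orbC.
have PT := (NKP NK).1.
case: (eqVneq P (star p :\ nn)) => [E|_]; last by rewrite orbF.
by have := Sd_notopen pN nS; rewrite -E PT.
Qed.

Lemma typeD i P : i != nn -> i \notin Old -> i \notin New ->
  new_ksys nn tau k P -> i \notin P.
Proof.
move=> inn iO iN NK; apply/negP => iP; have [PT Pk] := NKP NK.
by have := F1 PT Pk iP inn; rewrite (negbTE iO) (negbTE iN).
Qed.

Lemma S_NS p : p \in New -> new_ksys nn tau k (star p).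
Proof. by move=> pN; have := NS_p (star p) pN; rewrite star_open eqxx inE => /andP[]. Qed.

Lemma SB_NS p : p \in New -> nn |: star p \in tau -> new_ksys nn tau k (nn |: star p).
Proof.
move=> pN H; have := NS_p (nn |: star p) pN; rewrite H D1eq eqxx orbT inE.
by case/andP.
Qed.

Local Notation cond i := [set P in NS | (i \in P) == (nn \in P)].
Local Notation U := [set P in NS | nn \notin P].

Lemma cntA p : p \in New -> nn \notin star p -> nn |: star p \notin tau ->
  0 < #|U| /\ #|cond p| = #|U| - 1.
Proof.
move=> pN nS nSt.
have SU : star p \in U by rewrite !inE S_NS // nS.
have -> : cond p = U :\ star p.
  apply/setP => P; rewrite !inE; case NK: (new_ksys nn tau k P) => /=; last by rewrite andbF.
  rewrite (typeA pN nS nSt NK); case: (eqVneq P (star p)) => [->|_] /=; first by rewrite (negbTE nS).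
  by case: (nn \in P).
rewrite (cardsD1 (star p) U) SU; split => //.
by rewrite add1n subn1.
Qed.

Lemma cntB p : p \in New -> nn \notin star p -> nn |: star p \in tau ->
  #|cond p| = #|U|.
Proof.
move=> pN nS nSt.
have SU : star p \in U by rewrite !inE S_NS // nS.
have -> : cond p = (nn |: star p) |: (U :\ star p).
  apply/setP => P; rewrite !inE.
  case: (eqVneq P (nn |: star p)) => [->|PS2].
    by rewrite SB_NS // !inE eqxx /= star_in orbT.
  case NK: (new_ksys nn tau k P) => /=; last by case: (P != star p).
  rewrite (typeB pN nS NK) (negbTE PS2) orbF; case: (eqVneq P (star p)) => [->|_] /=; first by rewrite (negbTE nS).
  by case: (nn \in P).
by rewrite cardsU1 !inE eqxx /= (cardsD1 (star p) U) SU !andbF add1n.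
Qed.

Lemma cntC p : p \in New -> nn \in star p -> #|cond p| = #|U|.+1.
Proof.
move=> pN nS.
have -> : cond p = star p |: U.
  apply/setP => P; rewrite !inE.
  case: (eqVneq P (star p)) => [->|PS]; first by rewrite S_NS // nS star_in.
  case NK: (new_ksys nn tau k P) => //=.
  rewrite (typeC pN nS NK) (negbTE PS) /=.
  by case: (nn \in P).
by rewrite cardsU1 !inE nS andbF add1n.
Qed.

Lemma cntD i : i != nn -> i \notin Old -> i \notin New -> #|cond i| = #|U|.
Proof.
move=> inn iO iN; congr #|pred_of_set _|; apply/setP => P; rewrite !inE.
case NK: (new_ksys nn tau k P) => //=.
rewrite (negbTE (typeD inn iO iN NK)).
by case: (nn \in P).
Qed.


Lemma IsetP i : (i \in Iset nn tau k) = (i != nn) && (i \notin Old).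
Proof. by rewrite /Iset in_set. Qed.

Lemma New_nn p : p \in New -> p != nn.
Proof. by case/newP. Qed.

Lemma New_I p : p \in New -> p \in Iset nn tau k.
Proof.
move=> pN; rewrite IsetP New_nn //=; apply/negP => /old_new; by rewrite pN.
Qed.

Lemma nn_Old : nn \notin Old.
Proof. by apply/negP => /oldP[]; rewrite eqxx. Qed.

Lemma nn_New : nn \notin New.
Proof. by apply/negP => /newP[]; rewrite eqxx. Qed.

Lemma decomp P : new_ksys nn tau k P -> P :\ nn = (P :&: Old) :|: (P :&: New).
Proof.
move=> NK; have [PT Pk] := NKP NK.
apply/setP => x; rewrite in_setD1 in_setU !in_setI.
case: (eqVneq x nn) => [->|xn] /=; first by rewrite (negbTE nn_Old) (negbTE nn_New) !andbF.
case xP: (x \in P) => //=; by rewrite (F1 PT Pk xP xn).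
Qed.

Lemma NS_newpt P : new_ksys nn tau k P -> exists2 p, p \in New & p \in P.
Proof.
by rewrite new_ksysP => /andP[_ /existsP[p /andP[pP pN]]]; exists p.
Qed.

Lemma enum_set (aT : finType) (X : {set aT}) m : #|X| = m ->
  exists f : 'I_m -> aT, injective f /\ [set f j | j in 'I_m] = X.
Proof.
move=> <-; exists enum_val; split; first exact: enum_val_inj.
apply/setP => x; apply/imsetP/idP => [[j _ ->]|Hx]; first exact: enum_valP.
by exists (enum_rank_in Hx x); rewrite ?enum_rankK_in.
Qed.


Lemma NSin P : (P \in NS) = new_ksys nn tau k P.
Proof. by rewrite inE. Qed.

Lemma main (s : nat) :
  Iset nn tau k != set0 ->
  (forall i, i \in Iset nn tau k -> Nq nn tau k i = s) ->
  let NS := new_ksystems nn tau k in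
  let Old := old_pts nn tau k in
  let New := new_pts nn tau k in
  let mu1 := #|Iset nn tau k| in
  (exists (A R : 'I_s.+1 -> {set T}),
      [/\ (forall j, A j \subset Old /\ R j \subset New /\ R j != set0),
          injective (fun j => A j :|: R j),
          NS = [set A j :|: R j | j in 'I_s.+1],
          (forall j, upper nn (A j :|: R j) /\ nonpaired nn tau k (A j :|: R j)) &
          (forall p, p \in New -> #|[set j | p \in R j]| = 1) /\
          mu1 = #|New|])
  \/
  (exists (A R : 'I_s -> {set T}),
      [/\ (forall j, A j \subset Old /\ R j \subset New /\ R j != set0),
          injective (fun j => A j :|: R j) &
          NS = [set A j :|: R j | j in 'I_s] :|:
               [set nn |: (A j :|: R j) | j in 'I_s]])
  \/
  (NS = set0 /\ s = 0)
  \/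
  (exists (x : nat) (A R : 'I_x -> {set T}),
      [/\ (forall j, A j \subset Old /\ R j \subset New /\ R j != set0),
          injective (fun j => A j :|: R j),
          NS = [set nn |: (A j :|: R j) | j in 'I_x],
          (forall j, nonpaired nn tau k (nn |: (A j :|: R j))) &
          (forall p, p \in New -> #|[set j | p \in R j]| = 1)]).
Proof.
move=> HI HN NS' Old' New' mu1; rewrite {}/NS' {}/Old' {}/New' {}/mu1.
have HNc i : i \in Iset nn tau k -> #|cond i| = s.
  by move=> iI; rewrite -(HN i iI) Nq_eq //; move: iI; rewrite IsetP => /andP[].
case: (boolP [exists p in New, (nn \notin star p) && (nn |: star p \notin tau)]).
  move=> /existsP[p0 /andP[p0N /andP[n0 n0t]]].
  have [Upos Np0] := cntA p0N n0 n0t.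
  have sE : s = #|U| - 1 by rewrite -Np0 (HNc p0 (New_I p0N)).
  have allA p : p \in New -> nn \notin star p /\ nn |: star p \notin tau.
    move=> pN; have := HNc p (New_I pN); rewrite sE.
    case: (boolP (nn \in star p)) => nS; first by rewrite cntC // => E; lia.
    case: (boolP (nn |: star p \in tau)) => nSt; first by rewrite cntB // => E; lia.
    done.
  have IN : Iset nn tau k = New.
    apply/setP => i; apply/idP/idP => [iI|]; last exact: New_I.
    case: (boolP (i \in New)) => // iN; have := HNc i iI.
    move: iI; rewrite IsetP => /andP[inn iO]; rewrite cntD // sE => E; lia.
  have NSstar P : new_ksys nn tau k P -> exists2 p, p \in New & P = star p.
    move=> NK; have [p pN pP] := NS_newpt NK; exists p => //.
    have [nS nSt] := allA p pN; apply/eqP; by rewrite -(typeA pN nS nSt NK).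
  have NSU : NS = U.
    apply/setP => P; rewrite !inE; case NK: (new_ksys nn tau k P) => //=.
    by have [p pN ->] := NSstar P NK; have [] := allA p pN.
  have cNS : #|NS| = s.+1 by rewrite NSU sE; lia.
  have [f [finj Hf]] := enum_set cNS.
  have fNS j : new_ksys nn tau k (f j) by rewrite -NSin -Hf; apply/imsetP; exists j.
  have fup j : nn \notin f j.
    by have [p pN ->] := NSstar _ (fNS j); have [] := allA p pN.
  have fdec j : f j :&: Old :|: f j :&: New = f j by rewrite -decomp // D1_id.
  left; exists (fun j => f j :&: Old), (fun j => f j :&: New); split.
  - move=> j; split; first exact: subsetIr; split; first exact: subsetIr.
    have [p pN pP] := NS_newpt (fNS j); apply/set0Pn; exists p; by rewrite in_setI pP pN.
  - by move=> j1 j2 /=; rewrite !fdec; exact: finj.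
  - by rewrite (eq_imset _ fdec) Hf.
  - move=> j; rewrite fdec; split; first exact: fup.
    have [p pN E] := NSstar _ (fNS j); have [nS nSt] := allA p pN.
    rewrite /nonpaired /paired; have [PT Pk] := NKP (fNS j).
    by rewrite /msystem PT Pk eqxx /= (negbTE (fup j)) E (negbTE nSt).
  - split; last by rewrite IN.
    move=> p pN; have [nS nSt] := allA p pN.
    have /imsetP[j0 _ E0] : star p \in [set f j | j in 'I__] by rewrite Hf NSin S_NS.
    have -> : [set j | p \in f j :&: New] = [set j0].
      apply/setP => j; rewrite in_set1 in_set in_setI pN andbT (typeA pN nS nSt (fNS j)) E0.
      by rewrite (inj_eq finj).
    by rewrite cards1.
move=> noA.
have allnA p : p \in New -> (nn \in star p) || (nn |: star p \in tau).
  move=> pN; apply/negP => /negP; rewrite negb_or => H.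
  by move/negP: noA; apply; apply/existsP; exists p; rewrite pN.
case: (boolP [exists p in New, nn \in star p]).
  move=> /existsP[p0 /andP[p0N n0]].
  have sE : s = #|U|.+1 by rewrite -(cntC p0N n0) (HNc p0 (New_I p0N)).
  have allC p : p \in New -> nn \in star p.
    move=> pN; have := HNc p (New_I pN); rewrite sE.
    case: (boolP (nn \in star p)) => // nS.
    have nSt : nn |: star p \in tau by have := allnA p pN; rewrite (negbTE nS).
    by rewrite cntB // => E; lia.
  have NSstar P : new_ksys nn tau k P -> exists2 p, p \in New & P = star p.
    move=> NK; have [p pN pP] := NS_newpt NK; exists p => //.
    apply/eqP; by rewrite -(typeC pN (allC p pN) NK).
  have [f [finj Hf]] := @enum_set _ NS #|NS| erefl.
  have fNS j : new_ksys nn tau k (f j) by rewrite -NSin -Hf; apply/imsetP; exists j.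
  have fdn j : nn \in f j by have [p pN ->] := NSstar _ (fNS j); exact: allC.
  have fdec j : nn |: (f j :&: Old :|: f j :&: New) = f j by rewrite -decomp // setD1K.
  right; right; right; exists #|NS|, (fun j => f j :&: Old), (fun j => f j :&: New); split.
  - move=> j; split; first exact: subsetIr; split; first exact: subsetIr.
    have [p pN pP] := NS_newpt (fNS j); apply/set0Pn; exists p; by rewrite in_setI pP pN.
  - move=> j1 j2 /= E; apply: finj; by rewrite -fdec E fdec.
  - by rewrite (eq_imset _ fdec) Hf.
  - move=> j; rewrite fdec.
    have [p pN E] := NSstar _ (fNS j).
    rewrite /nonpaired /paired; have [PT Pk] := NKP (fNS j).
    by rewrite /msystem PT Pk eqxx /= fdn E (negbTE (Sd_notopen pN (allC p pN))).
  - move=> p pN.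
    have /imsetP[j0 _ E0] : star p \in [set f j | j in 'I__] by rewrite Hf NSin S_NS.
    have -> : [set j | p \in f j :&: New] = [set j0].
      apply/setP => j; rewrite in_set1 in_set in_setI pN andbT (typeC pN (allC p pN) (fNS j)) E0.
      by rewrite (inj_eq finj).
    by rewrite cards1.
move=> noC.
have allB p : p \in New -> nn \notin star p /\ nn |: star p \in tau.
  move=> pN; have nS : nn \notin star p.
    by apply/negP => nS; move/negP: noC; apply; apply/existsP; exists p; rewrite pN.
  by split => //; have := allnA p pN; rewrite (negbTE nS).
have sE : s = #|U|.
  have [i0 i0I] := set0Pn _ HI; rewrite -(HNc i0 i0I).
  case: (boolP (i0 \in New)) => i0N.
    by have [nS nSt] := allB i0 i0N; rewrite cntB.
  by move: i0I; rewrite IsetP => /andP[inn iO]; rewrite cntD.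
have [f [finj Hf]] := @enum_set _ U s (esym sE).
have fU j : new_ksys nn tau k (f j) /\ nn \notin f j.
  have : f j \in U by rewrite -Hf; apply/imsetP; exists j.
  by rewrite !inE => /andP[].
have fdec j : f j :&: Old :|: f j :&: New = f j.
  by have [NK nf] := fU j; rewrite -decomp // D1_id.
have upstar P : new_ksys nn tau k P -> nn \notin P -> exists2 p, p \in New & P = star p.
  move=> NK nP; have [p pN pP] := NS_newpt NK; exists p => //.
  have [nS nSt] := allB p pN.
  move: pP; rewrite (typeB pN nS NK) => /orP[/eqP //|/eqP E].
  by rewrite E !inE eqxx in nP.
right; left; exists (fun j => f j :&: Old), (fun j => f j :&: New); split.
- move=> j; split; first exact: subsetIr; split; first exact: subsetIr.
  have [p pN pP] := NS_newpt (fU j).1; apply/set0Pn; exists p; by rewrite in_setI pP pN.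
- by move=> j1 j2 /=; rewrite !fdec; exact: finj.
- rewrite (eq_imset _ fdec) Hf.
  have fdec2 j : nn |: (f j :&: Old :|: f j :&: New) = nn |: f j by rewrite fdec.
  rewrite (eq_imset _ fdec2).
  apply/setP => P; rewrite in_setU; apply/idP/idP.
    rewrite NSin => NK; have [p pN pP] := NS_newpt NK; have [nS nSt] := allB p pN.
    have : star p \in U by rewrite !inE S_NS.
    rewrite -{1}Hf => /imsetP[j0 _ E0].
    move: pP; rewrite (typeB pN nS NK) => /orP[/eqP ->|/eqP ->].
      by apply/orP; left; rewrite !inE S_NS // nS.
    by apply/orP; right; apply/imsetP; exists j0; rewrite // E0.
  case/orP; first by rewrite !inE => /andP[].
  move=> /imsetP[j _ ->]; have [NK nf] := fU j.
  have [p pN E] := upstar _ NK nf; have [nS nSt] := allB p pN.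
  by rewrite NSin E SB_NS.
Qed.

End S.

Unset Implicit Arguments.

Theorem theorem3 (n : nat) (hn : 2 <= n) (tau : {set {set 'I_n}}) (k s : nat) :
  let nn := lastpt hn in
  is_topology tau -> 1 <= k ->
  Iset nn tau k != set0 ->
  (forall i, i \in Iset nn tau k -> Nq nn tau k i = s) ->
  let NS := new_ksystems nn tau k in
  let Old := old_pts nn tau k in
  let New := new_pts nn tau k in
  let mu1 := #|Iset nn tau k| in
  (* (1a) *)
  (exists (A R : 'I_s.+1 -> {set 'I_n}),
      [/\ (forall j, A j \subset Old /\ R j \subset New /\ R j != set0),
          injective (fun j => A j :|: R j),
          NS = [set A j :|: R j | j in 'I_s.+1],
          (forall j, upper nn (A j :|: R j) /\ nonpaired nn tau k (A j :|: R j)) &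
          (forall p, p \in New -> #|[set j | p \in R j]| = 1) /\
          mu1 = #|New|])
  \/
  (* (1b) *)
  (exists (A R : 'I_s -> {set 'I_n}),
      [/\ (forall j, A j \subset Old /\ R j \subset New /\ R j != set0),
          injective (fun j => A j :|: R j) &
          NS = [set A j :|: R j | j in 'I_s] :|:
               [set nn |: (A j :|: R j) | j in 'I_s]])
  \/
  (* (1c) *)
  (NS = set0 /\ s = 0)
  \/
  (* (1d) *)
  (exists (x : nat) (A R : 'I_x -> {set 'I_n}),
      [/\ (forall j, A j \subset Old /\ R j \subset New /\ R j != set0),
          injective (fun j => A j :|: R j),
          NS = [set nn |: (A j :|: R j) | j in 'I_x],
          (forall j, nonpaired nn tau k (nn |: (A j :|: R j))) &
          (forall p, p \in New -> #|[set j | p \in R j]| = 1)]).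
Proof.
move=> nn Htop _ HI HN.
exact: (main Htop HI HN).
Qed.
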